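(* Let $m \ge 1$ and let $Z_1,\dots,Z_{m+1}$ be a finitely exchangeable sequence of Bernoulli random variables. Let $S_m = \sum_{i=1}^m Z_i$ and $S_{m+1} = \sum_{i=1}^{m+1} Z_i$. If $S_m$ is not uniformly distributed on $\{0,1,\dots,m\}$, then $S_{m+1}$ is not uniformly distributed on $\{0,1,\dots,m+1\}$.
   Context: Finitely exchangeable means the joint distribution of $(Z_1,\dots,Z_{m+1})$ is invariant under permutations of the indices. *)

(* Defs.v *)
From HB Require Import structures.
From mathcomp Require Import all_boot all_order all_algebra all_fingroup.
From mathcomp Require Import all_classical all_reals all_analysis.
Set Implicit Arguments. Unset Strict Implicit. Unset Printing Implicit Defensive.
Import Order.TTheory GRing.Theory Num.Theory.
Local Open Scope classical_set_scope.
Local Open Scope ring_scope.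

(* Z : 'I_n -> T -> R is a family of random variables Z_1..Z_n (indexed 0..n-1). *)

Definition bernoulli_rv d (T : measurableType d) (R : realType) (Z : T -> R) :=
  measurable_fun setT Z /\ forall w, Z w = 0 \/ Z w = 1.

Definition exchangeable d (T : measurableType d) (R : realType)
    (P : probability T R) (n : nat) (Z : 'I_n -> T -> R) :=
  forall (s : 'S_n) (A : set ('I_n -> R)),
    P [set w | A (fun i => Z (s i) w)] = P [set w | A (fun i => Z i w)].

Definition uniform_on_0N d (T : measurableType d) (R : realType)
    (P : probability T R) (N : nat) (X : T -> R) :=
  forall k : nat, (k <= N)%N -> P [set w | X w = k%:R] = ((N.+1)%:R^-1)%:E.

Definition psum (T : Type) (R : realType) (n : nat) (Z : 'I_n -> T -> R) (k : nat)
  : T -> R := fun w => \sum_(i < n | (i < k)%N) Z i w.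

(* Main.v *)
Set Warnings "-all".
Require Import Defs.
From HB Require Import structures.
From mathcomp Require Import all_boot all_order all_algebra all_fingroup.
From mathcomp Require Import all_classical all_reals all_analysis.
From mathcomp Require Import ring lra.
Import Order.TTheory GRing.Theory Num.Theory.
Local Open Scope classical_set_scope.
Local Open Scope ring_scope.

Section Aux.
Context (d : measure_display) (T : measurableType d) (R : realType)
    (P : probability T R).

Lemma lvl_meas (f : T -> R) (c : R) : measurable_fun setT f ->
  measurable [set w | f w = c].
Proof.
move=> mf; have := mf measurableT [set c] (measurable_set1 c).
by rewrite setTI.
Qed.

Lemma finE (X : set T) : measurable X -> P X = (fine (P X))%:E.
Proof. by move=> mX; rewrite fineK // fin_num_measure. Qed.

Variable (n : nat) (Z : 'I_n.+1 -> T -> R).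
Hypothesis hB : forall i, bernoulli_rv (Z i).
Hypothesis hex : exchangeable P Z.

Let S w := \sum_(i < n.+1) Z i w.
Let A (k : R) := [set w | S w = k].
Let B (i : 'I_n.+1) := [set w | Z i w = 1].

Lemma mZ i : measurable_fun setT (Z i).
Proof. by case: (hB i). Qed.

Lemma mS : measurable_fun setT S.
Proof. rewrite /S; apply: measurable_sum => i; exact: mZ. Qed.

Lemma sum_perm (s : 'S_n.+1) w : \sum_j Z (s j) w = S w.
Proof. by rewrite /S [RHS](reindex_inj (@perm_inj _ s)). Qed.

Lemma L1 k i : P (A k `&` B i) = P (A k `&` B ord_max).
Proof.
have := hex (tperm i ord_max) [set f | \sum_j f j = k /\ f ord_max = 1].
rewrite /= tpermR => <-; congr (P _); apply/seteqP; split => w /=.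
  by move=> [Sk Zi]; split; [rewrite sum_perm | exact: Zi].
by move=> [Sk Zi]; split; [rewrite /A /= -(sum_perm (tperm i ord_max)) | exact: Zi].
Qed.

Lemma indicZ i x : \1_(B i) x = Z i x.
Proof.
rewrite indicE; case: (hB i) => _ /(_ x) [] h.
  rewrite [RHS]h memNset // /B /= => E; move: h; rewrite E => /eqP.
  by rewrite oner_eq0.
rewrite [RHS]h mem_set //.
Qed.

Lemma mB i : measurable (B i).
Proof. exact: lvl_meas (mZ i). Qed.

Lemma mA k : measurable (A k).
Proof. exact: lvl_meas mS. Qed.

Lemma L2 k : (\sum_(i < n.+1) P (A k `&` B i) = k%:E * P (A k))%E.
Proof.
transitivity (\sum_(i < n.+1) \int[P]_(x in A k) (\1_(B i) x)%:E)%E.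
  apply: eq_bigr => i _; rewrite integral_indic; [|exact: mA|exact: mB].
  by rewrite setIC.
rewrite -(ge0_integral_sum _ (mA k)); last 2 first.
- move=> i; apply/measurable_realfun.measurable_EFinP.
  exact: measurable_realfun.measurable_indic (mB i).
- by move=> i x _; rewrite lee_fin indicE.
rewrite -(integral_cst _ (mA k)).
apply: eq_integral => x; rewrite inE /= => Sk.
rewrite sumEFin; congr EFin; rewrite -Sk /S.
by apply: eq_bigr => i _; rewrite indicZ.
Qed.
Lemma L3 k : (P (A k `&` B ord_max) *+ n.+1 = k%:E * P (A k))%E.
Proof.
rewrite -L2; under eq_bigr do rewrite L1.
by rewrite sumr_const card_ord.
Qed.

Lemma SE w : S w = psum Z n w + Z ord_max w.
Proof.
rewrite /psum big_mkcond big_ord_recr /= ltnn addr0 /S big_ord_recr /=.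
by congr (_ + _); apply: eq_bigr => i _; rewrite /= ltn_ord.
Qed.

Let B0 := [set w | Z ord_max w = 0].

Lemma mB0 : measurable B0.
Proof. exact: lvl_meas (mZ ord_max). Qed.

Lemma splitA k : A k = (A k `&` B0) `|` (A k `&` B ord_max).
Proof.
apply/seteqP; split => w /=.
  by move=> Sk; case: (hB ord_max) => _ /(_ w) [] h; [left|right].
by case=> -[].
Qed.

Lemma disj k k' : (A k `&` B0) `&` (A k' `&` B ord_max) = set0.
Proof.
apply/seteqP; split => w //= [[_ h0] [_ h1]].
by move: h1; rewrite /B /= h0 => /eqP; rewrite eq_sym oner_eq0.
Qed.

Lemma splitC (j : nat) : [set w | psum Z n w = j%:R] =
  (A j%:R `&` B0) `|` (A j.+1%:R `&` B ord_max).
Proof.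
apply/seteqP; split => w /=.
  move=> pj; case: (hB ord_max) => _ /(_ w) [] h.
    by left; split => //; rewrite /A /= SE pj h addr0.
  by right; split => //; rewrite /A /= SE pj h -natr1.
case=> -[Sj h].
  by move: Sj; rewrite /A /= SE; rewrite /B0 /= in h; rewrite h addr0.
move: Sj; rewrite /A /= SE; rewrite /B /= in h; rewrite h -natr1.
by move/addIr.
Qed.

Lemma core (j : nat) : (j <= n)%N ->
  (forall k : nat, (k <= n.+1)%N -> P (A k%:R) = ((n.+2)%:R^-1)%:E) ->
  P [set w | psum Z n w = j%:R] = ((n.+1)%:R^-1)%:E.
Proof.
move=> jn hU.
have mX k : measurable (A k `&` B0) by apply: measurableI; [exact: mA|exact: mB0].
have mY k : measurable (A k `&` B ord_max) by apply: measurableI; [exact: mA|exact: mB].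
have E1 : P [set w | psum Z n w = j%:R] =
    (P (A j%:R `&` B0) + P (A j.+1%:R `&` B ord_max))%E.
  by rewrite splitC; apply: measureU => //; exact: disj.
have E2 : P (A j%:R) = (P (A j%:R `&` B0) + P (A j%:R `&` B ord_max))%E.
  by rewrite {1}splitA; apply: measureU => //; exact: disj.
rewrite hU ?(leqW jn) // in E2.
have E3 := L3 j%:R; rewrite hU ?(leqW jn) // in E3.
have E4 := L3 j.+1%:R; rewrite hU // in E4.
rewrite E1; move: E2 E3 E4.
rewrite (finE _ (mX j%:R)) (finE _ (mY j%:R)) (finE _ (mY j.+1%:R)).
move: (fine (P (A j%:R `&` B0))) (fine (P (A j%:R `&` B ord_max))) (fine (P (A j.+1%:R `&` B ord_max))) => x y z.
rewrite -EFinD -!EFin_natmul -!EFinM => -[E2] [E3] [E4].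
rewrite -EFinD; congr EFin.
have hn1 : (n.+1%:R : R) != 0 by rewrite pnatr_eq0.
have hn2 : (n.+2%:R : R) != 0 by rewrite pnatr_eq0.
have Ey : y = j%:R * n.+2%:R^-1 / n.+1%:R.
  by apply: (mulIf hn1); rewrite mulr_natr E3 divfK.
have Ez : z = j.+1%:R * n.+2%:R^-1 / n.+1%:R.
  by apply: (mulIf hn1); rewrite mulr_natr E4 divfK.
have Ex : x = n.+2%:R^-1 - y by rewrite E2 addrK.
rewrite Ex Ez Ey -(natr1 j) -(natr1 n.+1).
rewrite -(natr1 n.+1) in hn2.
field; by rewrite -mulrS natr1 !pnatr_eq0.
Qed.
End Aux.

Theorem lemmaA8 (d : measure_display) (T : measurableType d) (R : realType)
    (P : probability T R) (m : nat) (Z : 'I_m.+1 -> T -> R) :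
  (1 <= m)%N ->
  (forall i, bernoulli_rv (Z i)) ->
  exchangeable P Z ->
  ~ uniform_on_0N P m (psum Z m) ->
  ~ uniform_on_0N P m.+1 (psum Z m.+1).
Proof.
move=> _ hB hex hnu hu; apply: hnu => k km.
apply: (@core _ _ _ P m Z hB hex k km) => k' hk'.
have pE w : psum Z m.+1 w = \sum_(i < m.+1) Z i w.
  by rewrite /psum; apply: eq_bigl => i; rewrite ltn_ord.
rewrite -(hu k' hk'); congr (P _); apply/seteqP; split => w /=; by rewrite pE.
Qed.
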